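(* Let $n$ be an odd positive integer and let $\mathrm{Dic}_n=\langle x,y\mid x^{2n}=1,\ y^2=x^n,\ y^{-1}xy=x^{-1}\rangle$ be the dicyclic group of order $4n$, whose irreducible complex characters are $\chi_0,\chi_1,\chi_2,\chi_3,\psi_1,\ldots,\psi_{n-1}$ as described in the context. Let $C\subset\mathrm{Dic}_n$ be a nonempty subset that is a Delsarte $T$-design for $T=T(C)$ in the conjugacy class scheme of $\mathrm{Dic}_n$. Then $\chi_2\in T$ if and only if $\chi_3\in T$; and for each $1\le \ell\le n-1$ and each integer $k$ with $-n<k<n$ and $\gcd(k,2n)=1$, $\psi_\ell\in T$ if and only if $\psi_{|k\ell\ \mathrm{MOD}\ 2n|}\in T$.
   Context: Every element of $\mathrm{Dic}_n$ is uniquely $x^k$ or $yx^k$ with $0\le k<2n$. The irreducible characters (for $n$ odd) are: $\chi_0\equiv1$; $\chi_1(x^k)=1$, $\chi_1(yx^k)=-1$; $\chi_2(x^k)=(-1)^k$, $\chi_2(yx^{k})=i$ for $k$ even and $-i$ for $k$ odd; $\chi_3=\overline{\chi_2}$; and for $1\le r\le n-1$, $\psi_r(x^k)=2\cos(\pi rk/n)$, $\psi_r(yx^k)=0$. For an irreducible character $\chi$ of a finite group $G$, the corresponding primitive idempotent of the conjugacy class association scheme is the matrix $E_\chi\in\mathrm{Mat}_G(\mathbb{C})$ with $(g,h)$-entry $\frac{\chi(1)}{|G|}\overline{\chi(g^{-1}h)}$. For a nonempty $C\subseteq G$ with $0/1$ characteristic vector $\mathbf{x}$, $T(C)$ is the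 set of irreducible characters $\chi$ with $E_\chi\mathbf{x}=0$, and $C$ is a Delsarte $T$-design if $E_\chi\mathbf{x}=0$ for all $\chi\in T$. For integers $k$ and $m>1$, $k\ \mathrm{MOD}\ m$ denotes the unique $k'\equiv k\pmod m$ with $-m/2<k'\le m/2$. *)

(* Defs.v *)
From HB Require Import structures.
From mathcomp Require Import all_boot all_order all_algebra.
From mathcomp Require Import reals trigo.
From mathcomp Require Import complex.
Set Implicit Arguments. Unset Strict Implicit. Unset Printing Implicit Defensive.
Import Order.TTheory GRing.Theory Num.Theory.
Local Open Scope ring_scope.

(* Elements of Dic_n in normal form: (false, k) = x^k, (true, k) = y x^k,
   with k taken modulo 2n (the type 'Z_(2n) is Z/2nZ as soon as n >= 1). *)
Definition Dic (n : nat) : finType := (bool * 'Z_(n.*2))%type.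

Definition dic_mul (n : nat) (g h : Dic n) : Dic n :=
  match g, h with
  | (false, a), (false, b) => (false, a + b)
  | (false, a), (true, b)  => (true, b - a)           (* x^a y x^b = y x^(b-a) *)
  | (true, a),  (false, b) => (true, a + b)
  | (true, a),  (true, b)  => (false, n%:R + b - a)   (* y x^a y x^b = x^(n+b-a) *)
  end.

Definition dic_inv (n : nat) (g : Dic n) : Dic n :=
  match g with
  | (false, k) => (false, - k)
  | (true, k)  => (true, k + n%:R)                     (* (y x^k)^-1 = y x^(k+n) *)
  end.

Definition dic_one (n : nat) : Dic n := (false, 0).

Inductive irr_idx : Type := Chi0 | Chi1 | Chi2 | Chi3 | Psi of nat.

Definition dic_char (R : realType) (n : nat) (i : irr_idx) (g : Dic n) : R[i] :=
  let k := val g.2 in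
  match i with
  | Chi0 => 1
  | Chi1 => if g.1 then -1 else 1
  | Chi2 => if g.1 then (if ~~ odd k then 'i else - 'i) else (-1) ^+ k
  | Chi3 => ((if g.1 then (if ~~ odd k then 'i else - 'i) else (-1) ^+ k))^*
  | Psi r => if g.1 then 0
             else Complex (2 * cos (pi * (r * k)%:R / n%:R) : R) 0
  end.

(* (g,h)-entry of the primitive idempotent E_chi. *)
Definition idemE (R : realType) (n : nat) (i : irr_idx) (g h : Dic n) : R[i] :=
  dic_char R i (dic_one n) / #|{: Dic n}|%:R
  * (dic_char R i (dic_mul (dic_inv g) h))^*.

Definition charvec (R : realType) (n : nat) (C : {set Dic n}) (h : Dic n) : R[i] :=
  if h \in C then 1 else 0.

Definition inT (R : realType) (n : nat) (C : {set Dic n}) (i : irr_idx) : Prop :=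
  forall g : Dic n, \sum_(h : Dic n) idemE R i g h * charvec R C h = 0.

Definition delsarte_design (R : realType) (n : nat) (C : {set Dic n})
  (T : irr_idx -> Prop) : Prop :=
  forall i, T i -> forall g : Dic n, \sum_(h : Dic n) idemE R i g h * charvec R C h = 0.

(* k MOD m: the unique k' = k (mod m) with -m/2 < k' <= m/2. *)
Definition zMOD (k : int) (m : nat) : int :=
  let r := (k %% m%:Z)%Z in
  if (2 * r <= m%:Z) then r else r - m%:Z.

(* Main.v *)
Require Import Defs.
From HB Require Import structures.
From mathcomp Require Import all_boot all_order all_algebra all_field.
From mathcomp Require Import reals trigo.
From mathcomp Require Import complex.
Import Order.TTheory GRing.Theory Num.Theory.
Local Open Scope ring_scope.
Definition PhiQ (d : nat) : {poly rat} := map_poly (intr : int -> rat) 'Phi_d.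

Lemma PhiQ_map (K : numFieldType) d :
  map_poly (ratr : rat -> K) (PhiQ d) = map_poly (intr : int -> K) 'Phi_d.
Proof.
rewrite /PhiQ -map_poly_comp; apply: eq_map_poly => x /=; by rewrite ratr_int.
Qed.

Lemma rootA (z : algC) d (P : {poly rat}) : d.-primitive_root z ->
  root (map_poly ratr P) z = (PhiQ d %| P).
Proof.
move=> pz; have [p [Dp mon] dv] := minCpolyP z.
rewrite dv; suff -> : p = PhiQ d by [].
have E : minCpoly z = map_poly (ratr : rat -> algC) p := Dp.
apply: (@map_inj_poly _ _ (ratr : rat -> algC)); [exact: fmorph_inj | exact: rmorph0 |].
rewrite -E.
by rewrite (minCpoly_cyclotomic pz) PhiQ_map (Cintr_Cyclotomic pz).
Qed.

Lemma irrA d (q : {poly rat}) : (0 < d)%N -> q %| PhiQ d ->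
  size q = 1%N \/ PhiQ d %| q.
Proof.
move=> d0 qd; have [z pz] := C_prim_root_exists d0.
have [->|] := eqVneq (size q) 1%N; first by left.
rewrite -(size_map_poly (ratr : {rmorphism rat -> algC})) => /closed_rootP [x rx].
right; have : root (map_poly ratr (PhiQ d)) x.
  by apply: root_dvdp rx; rewrite dvdp_map.
rewrite PhiQ_map (Cintr_Cyclotomic pz) root_cyclotomic // => px.
by rewrite -(@rootA x d q px).
Qed.

Lemma rootPhi (K : numFieldType) d (w : K) : d.-primitive_root w ->
  root (map_poly (intr : int -> K) 'Phi_d) w.
Proof.
move=> pw; have d0 := prim_order_gt0 pw.
have := prod_Cyclotomic d0.
move/(congr1 (fun p => (map_poly (intr : int -> K) p).[w])).
rewrite rmorph_prod horner_prod rmorphB rmorph1 /= map_polyXn !hornerE.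
rewrite (prim_expr_order pw) subrr => /eqP; rewrite prodf_seq_eq0 => /hasP [e].
rewrite -dvdn_divisors // => ed /= re.
suff ee : e = d by rewrite -ee.
have e0 : (0 < e)%N by apply: dvdn_gt0 ed.
have := prod_Cyclotomic e0; rewrite (big_rem e) -?dvdn_divisors //.
move/(congr1 (fun p => (map_poly (intr : int -> K) p).[w])).
rewrite rmorphM hornerM (eqP re) mul0r rmorphB rmorph1 /= map_polyXn !hornerE.
move/eqP; rewrite eq_sym subr_eq0 -(prim_order_dvd pw) => de.
by apply/eqP; rewrite eqn_dvd de ed.
Qed.

Lemma rootB (K : numFieldType) d (w : K) (P : {poly rat}) : d.-primitive_root w ->
  root (map_poly ratr P) w = (PhiQ d %| P).
Proof.
move=> pw; have d0 := prim_order_gt0 pw.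
apply/idP/idP; last first.
  case/dvdpP => q ->; rewrite rmorphM rootM /=; apply/orP; right.
  by rewrite PhiQ_map rootPhi.
move=> Pw; case: (@irrA d _ d0 (dvdp_gcdl (PhiQ d) P)) => [sz1|dv].
  have cop : coprimep (PhiQ d) P by rewrite /coprimep sz1.
  rewrite -(coprimep_map (ratr : {rmorphism rat -> K})) in cop.
  have := coprimep_root cop; rewrite PhiQ_map => /(_ _ (@rootPhi K d w pw)).
  by rewrite (eqP Pw) eqxx.
exact: dvdp_trans dv (dvdp_gcdr _ _).
Qed.

Lemma galois_root (K : numFieldType) d (w : K) (P : {poly rat}) k :
  d.-primitive_root w -> coprime k d ->
  root (map_poly ratr P) w = root (map_poly ratr P) (w ^+ k).
Proof.
move=> pw ck; rewrite (@rootB K d w P pw) (@rootB K d _ P) //.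
by rewrite prim_root_exp_coprime.
Qed.
From mathcomp Require Import ring.

Section Trig.
Variables (R : realType) (n : nat).
Hypothesis n0 : (0 < n)%N.

Definition zeta : R[i] := Complex (cos (pi / n%:R)) (sin (pi / n%:R)).

Lemma mulcE (a b c d : R) :
  (Complex a b : R[i]) * Complex c d = Complex (a*c - b*d) (a*d + b*c).
Proof. by []. Qed.
Lemma addcE (a b c d : R) :
  (Complex a b : R[i]) + Complex c d = Complex (a+c) (b+d).
Proof. by []. Qed.
Lemma conjcE (a b : R) : (Complex a b : R[i])^* = Complex a (-b).
Proof. by []. Qed.
Lemma onecE : (1 : R[i]) = Complex 1 0.
Proof. by []. Qed.

Lemma zetaX m : zeta ^+ m =
  Complex (cos (pi * m%:R / n%:R)) (sin (pi * m%:R / n%:R)).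
Proof.
elim: m => [|m IH]; first by rewrite expr0 mulr0 mul0r cos0 sin0.
rewrite exprSr IH /zeta mulcE.
have -> : pi * m.+1%:R / n%:R = pi * m%:R / n%:R + pi / n%:R :> R.
  by rewrite -natr1 mulrDr mulr1 mulrDl.
by rewrite cosD sinD; congr Complex; rewrite addrC.
Qed.

Lemma zeta_conjM : zeta^* * zeta = 1.
Proof.
rewrite /zeta conjcE mulcE onecE; congr Complex.
  by rewrite mulNr opprK -!expr2 cos2Dsin2.
by rewrite mulNr mulrC subrr.
Qed.

Lemma zetaN : zeta ^+ n.*2 = 1.
Proof.
rewrite zetaX onecE.
have -> : pi * (n.*2)%:R / n%:R = pi *+ 2 :> R.
  rewrite -muln2 natrM mulrA mulrAC mulfK ?mulr_natr //.
  by rewrite pnatr_eq0 -lt0n.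
by rewrite cos2pi sin2pi.
Qed.

Lemma prim_zeta : (n.*2).-primitive_root zeta.
Proof.
have N0 : (0 < n.*2)%N by rewrite double_gt0.
have [m pm mN] := prim_order_exists N0 zetaN.
suff -> : n.*2 = m by [].
have m0 := prim_order_gt0 pm; have zm := prim_expr_order pm.
have mle : (m <= n.*2)%N := dvdn_leq N0 mN.
apply/eqP; rewrite eqn_leq mle andbT leqNgt; apply/negP => mlt.
pose p := if (m <= n)%N then m else (n.*2 - m)%N.
have p0 : (0 < p)%N by rewrite /p; case: ifP => // _; rewrite subn_gt0.
have pn : (p <= n)%N.
  rewrite /p; case: ifP => // /negbT; rewrite -ltnNge => nm.
  by rewrite leq_subLR -addnn leq_add2r ltnW.
have zp : zeta ^+ p = 1.
  rewrite /p; case: ifP => // _.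
  have := zetaN; rewrite -{1}(subnK (ltnW mlt)) exprD zm mulr1 //.
have [c1 _] : cos ((pi : R) * p%:R / n%:R) = 1 /\ sin ((pi : R) * p%:R / n%:R) = 0.
  by move: zp; rewrite zetaX onecE => -[-> ->].
have nR : (0 : R) < n%:R by rewrite ltr0n.
have pi0 : (0 : R) < pi := pi_gt0 R.
have x0 : (0 : R) < pi * p%:R / n%:R.
  by rewrite divr_gt0 // mulr_gt0 // ltr0n.
have xpi : (pi : R) * p%:R / n%:R <= pi.
  rewrite ler_pdivrMr // ler_pM2l // ler_nat //.
have : (pi : R) * p%:R / n%:R = 0.
  apply: (@cos_inj R); rewrite ?cos0 ?c1 //; rewrite in_itv /=.
    by rewrite xpi (ltW x0).
  by rewrite lexx (ltW pi0).
by move=> e; rewrite e ltxx in x0.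
Qed.

End Trig.

Section Dic.
Variables (R : realType) (n : nat) (C : {set Dic n}).
Hypothesis n0 : (0 < n)%N.

Let M := (Zp_trunc n.*2).+2.
Lemma MN : M = n.*2.
Proof. by apply: Zp_cast; rewrite -addnn -(addn1 1) leq_add. Qed.

Lemma valD (a b : 'Z_(n.*2)) : val (a + b) = ((val a + val b) %% M)%N.
Proof. by []. Qed.

Lemma expZsub (u : R[i]) (uN : u ^+ n.*2 = 1) (uc : u^* * u = 1) (a b : 'Z_(n.*2)) :
  u ^+ (val (b - a)) = u ^+ (val b) * u^* ^+ (val a).
Proof.
have uM : u ^+ M = 1 by rewrite MN.
have E : u ^+ (val (b - a)) * u ^+ (val a) = u ^+ (val b).
  by rewrite -exprD -(expr_mod _ uM) -valD subrK.
by rewrite -E -mulrA -exprMn [u * _]mulrC uc expr1n mulr1.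
Qed.

Lemma psival r (k : 'Z_(n.*2)) :
  dic_char R (Psi r) (false, k) = zeta R n ^+ (r * val k) + (zeta R n ^+ (r * val k))^*.
Proof.
rewrite /dic_char /= zetaX conjcE addcE; congr Complex; last by rewrite subrr.
by rewrite mulr_natl mulr2n.
Qed.


Lemma idemE_eq i (g h : Dic n) : idemE R i g h =
  (dic_char R i (dic_one n) / #|{: Dic n}|%:R) * (dic_char R i (dic_mul (dic_inv g) h))^*.
Proof. by []. Qed.

Definition cc r : R[i] := dic_char R (Psi r) (dic_one n) / #|{: Dic n}|%:R.

Lemma idem_psi r (s : bool) (a : 'Z_(n.*2)) (t : bool) (b : 'Z_(n.*2)) : idemE R (Psi r) ((s, a) : Dic n) ((t, b) : Dic n) =
  cc r * (if s == t then zeta R n ^+ (r * val (b - a)) + (zeta R n ^+ (r * val (b - a)))^* else 0).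
Proof.
rewrite idemE_eq -/(cc r); case: s; case: t.
- rewrite (_ : dic_mul _ _ = (false, n%:R + b - (a + n%:R))) //.
  have -> : n%:R + b - (a + n%:R) = b - a :> 'Z_(n.*2) by ring.
  by rewrite psival rmorphD /= conjCK addrC.
- by rewrite (_ : dic_mul _ _ = (true, a + n%:R + b)) // /dic_char /= conjC0.
- by rewrite (_ : dic_mul _ _ = (true, b - - a)) // /dic_char /= conjC0.
- rewrite (_ : dic_mul _ _ = (false, - a + b)) //.
  by rewrite addrC psival rmorphD /= conjCK addrC.
Qed.

Lemma sum_bool (F : bool -> R[i]) : \sum_(t : bool) F t = F true + F false.
Proof. by rewrite big_bool. Qed.

Definition Ssum s (u : R[i]) := \sum_(b : 'Z_(n.*2) | (s, b) \in C) u ^+ (val b).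

Lemma sumE r (s : bool) (a : 'Z_(n.*2)) :
  \sum_(h : Dic n) idemE R (Psi r) ((s, a) : Dic n) h * charvec R C h =
  cc r * \sum_(b : 'Z_(n.*2) | (s, b) \in C)
     (zeta R n ^+ (r * val (b - a)) + (zeta R n ^+ (r * val (b - a)))^*).
Proof.
transitivity (\sum_(t : bool) \sum_(b : 'Z_(n.*2)) idemE R (Psi r) (s, a) (t, b) * charvec R C (t, b)).
  by rewrite pair_bigA; apply: eq_bigr => -[t b].
rewrite sum_bool mulr_sumr [RHS]big_mkcond.
case: s.
- rewrite [X in _ + X]big1 ?addr0; last first.
    by move=> b _; rewrite idem_psi [_ == _]/= mulr0 mul0r.
  apply: eq_bigr => b _; rewrite idem_psi eqxx /charvec.
  by case: ifP => _; rewrite ?mulr1 ?mulr0.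
- rewrite [X in X + _]big1 ?add0r; last first.
    by move=> b _; rewrite idem_psi [_ == _]/= mulr0 mul0r.
  apply: eq_bigr => b _; rewrite idem_psi eqxx /charvec.
  by case: ifP => _; rewrite ?mulr1 ?mulr0.
Qed.


Lemma zr_N r : (zeta R n ^+ r) ^+ n.*2 = 1.
Proof. by rewrite exprAC zetaN // expr1n. Qed.

Lemma zr_c r : (zeta R n ^+ r)^* * zeta R n ^+ r = 1.
Proof. by rewrite rmorphXn -exprMn zeta_conjM expr1n. Qed.

Lemma sum_expand r (s : bool) (a : 'Z_(n.*2)) :
  \sum_(b : 'Z_(n.*2) | (s, b) \in C)
     (zeta R n ^+ (r * val (b - a)) + (zeta R n ^+ (r * val (b - a)))^*) =
  (zeta R n ^+ r)^* ^+ val a * Ssum s (zeta R n ^+ r)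
  + (zeta R n ^+ r) ^+ val a * Ssum s ((zeta R n ^+ r)^*).
Proof.
rewrite /Ssum !mulr_sumr -big_split; apply: eq_bigr => b _.
set u := zeta R n ^+ r.
rewrite exprM expZsub ?zr_N ?zr_c // rmorphM !rmorphXn /= conjCK /u.
by rewrite (mulrC (zeta R n ^+ r ^+ val b)) (mulrC ((zeta R n)^* ^+ r ^+ val b)).
Qed.

Lemma PsiChar r : ~~ (n %| r)%N ->
  inT R C (Psi r) <-> forall s, Ssum s (zeta R n ^+ r) = 0.
Proof.
move=> nr.
have cc0 : cc r != 0.
  rewrite /cc /dic_one psival.
  rewrite (_ : val (0 : 'Z_(n.*2)) = 0%N) // muln0 expr0 conjC1 mulf_neq0 //.
    by rewrite (_ : 1 + 1 = 2%:R :> R[i]) // pnatr_eq0.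
  rewrite invr_eq0 pnatr_eq0 -lt0n; apply/card_gt0P; by exists (dic_one n).
have uc := zr_c r.
have Sc : forall s, Ssum s (zeta R n ^+ r)^* = (Ssum s (zeta R n ^+ r))^*.
  move=> s; rewrite /Ssum rmorph_sum; apply: eq_bigr => i _. symmetry. apply: rmorphXn.
have vu : (zeta R n ^+ r)^* != zeta R n ^+ r.
  apply/eqP => e.
  have : (zeta R n) ^+ (r * 2) = 1 by rewrite exprM expr2 -{1}e uc.
  move/eqP; rewrite -(prim_order_dvd (@prim_zeta R n n0)) -!muln2 dvdn_pmul2r //.
  by rewrite (negbTE nr).
split.
- move=> H s; have H0 := H (s, 0); have H1 := H (s, 1).
  rewrite sumE sum_expand in H0; rewrite sumE sum_expand in H1.
  move: H0 H1 => /eqP; rewrite mulf_eq0 (negbTE cc0) /= => /eqP H0.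
  move/eqP; rewrite mulf_eq0 (negbTE cc0) /= => /eqP H1.
  rewrite !expr0 !mul1r Sc in H0.
  have m1 : (1 %% (Zp_trunc n.*2).+2)%N = 1%N by rewrite modn_small.
  rewrite m1 !expr1 Sc in H1.
  have E : (Ssum s (zeta R n ^+ r))^* = - Ssum s (zeta R n ^+ r).
    by apply/eqP; rewrite -addr_eq0 addrC H0.
  move: H1; rewrite E mulrN -mulrBl => /eqP; rewrite mulf_eq0 subr_eq0 (negbTE vu) /=.
  by move/eqP.
- by move=> H [s a]; rewrite sumE sum_expand Sc H conjC0 !mulr0 addr0 mulr0.
Qed.

End Dic.

Lemma Ssum_conj (R : realType) n (C : {set Dic n}) s (u : R[i]) :
  @Ssum R n C s u^* = (@Ssum R n C s u)^*.
Proof. by rewrite /Ssum rmorph_sum; apply: eq_bigr => i _; symmetry; apply: rmorphXn. Qed.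

Lemma chi3E (R : realType) n (g : Dic n) : dic_char R Chi3 g = (dic_char R Chi2 g)^*.
Proof. by []. Qed.

Lemma conj_sum23 (R : realType) n (C : {set Dic n}) (g : Dic n) :
  \sum_(h : Dic n) idemE R Chi3 g h * charvec R C h =
  (\sum_(h : Dic n) idemE R Chi2 g h * charvec R C h)^*.
Proof.
rewrite rmorph_sum; apply: eq_bigr => h _.
have cn : ((#|{: Dic n}|%:R : R[i])^-1)^* = (#|{: Dic n}|%:R)^-1 by rewrite fmorphV /= conjC_nat.
rewrite !idemE_eq !chi3E !rmorphM /= cn conjCK.
have cv : (charvec R C h)^* = charvec R C h.
  by rewrite /charvec; case: (h \in C); rewrite ?conjC1 ?conjC0.
by rewrite cv.
Qed.

Lemma Ssum_root (R : realType) n (C : {set Dic n}) s l (w : R[i]) :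
  root (map_poly (ratr : rat -> R[i])
          (\sum_(b : 'Z_(n.*2) | (s, b) \in C) 'X^(val b * l))) w =
  (@Ssum R n C s (w ^+ l) == 0).
Proof.
rewrite /root rmorph_sum horner_sum /Ssum.
suff -> : \sum_(b : 'Z_(n.*2) | (s, b) \in C) (map_poly (ratr : rat -> R[i]) 'X^(val b * l)).[w]
  = \sum_(b : 'Z_(n.*2) | (s, b) \in C) (w ^+ l) ^+ (val b) by [].
by apply: eq_bigr => b _; rewrite map_polyXn hornerXn mulnC exprM.
Qed.

Theorem corollary6p1 (R : realType) (n : nat) (C : {set Dic n}) :
  odd n -> C != set0 ->
  delsarte_design R C (inT R C) ->
  (inT R C Chi2 <-> inT R C Chi3) /\
  (forall (l : nat) (k : int),
      (1 <= l <= n.-1)%N -> - (n%:Z) < k < n%:Z -> gcdz k (n.*2)%:Z = 1%N ->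
      (inT R C (Psi l) <-> inT R C (Psi `|zMOD (k * l%:Z) n.*2|%N))).
Proof.
move=> nodd _ _; have n0 := odd_gt0 nodd.
split.
  split => H g; first by rewrite conj_sum23 H conjC0.
  by apply/eqP; rewrite -conjC_eq0 -conj_sum23 H.
move=> l k /andP[l1 ln] _ gk.
have N0 : (0 < n.*2)%N by rewrite double_gt0.
have nN : (n %| n.*2)%N by rewrite -muln2 dvdn_mulr.
have nl : ~~ (n %| l)%N.
  apply/negP => /(dvdn_leq l1); rewrite leqNgt.
  by move: ln; case: (n) n0 => // m _ /=; rewrite ltnS => ->.
pose k' := `|(k %% (n.*2)%:Z)%Z|%N.
have N0' : (n.*2)%:Z != 0 by rewrite eqz_nat -lt0n.
have kk : (k' : int) = (k %% (n.*2)%:Z)%Z by rewrite /k' gez0_abs //; apply: modz_ge0.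
have ck : coprime k' n.*2.
  by move: gk; rewrite -gcdz_modl -kk /gcdz /coprime /= => -[] ->.
pose rho := (k * l%:Z %% (n.*2)%:Z)%Z.
have rho0 : 0 <= rho by apply: modz_ge0.
have rhoN : rho < (n.*2)%:Z by rewrite ltz_pmod // ltz_nat.
pose rho' := `|rho|%N.
have rr : (rho' : int) = rho by rewrite /rho' gez0_abs.
have kl : ((k' * l) %% n.*2)%N = rho'.
  apply/eqP; rewrite -eqz_nat -modz_nat rr PoszM kk /rho; apply/eqP; exact: modzMml.
have rlt : (rho' < n.*2)%N by rewrite -ltz_nat rr.
have zk : zeta R n ^+ (k' * l) = zeta R n ^+ rho'.
  by rewrite -kl expr_mod // zetaN.
have cop_kn : coprime n k' by rewrite coprime_sym (coprime_dvdr nN ck).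
have nrho : ~~ (n %| rho')%N.
  rewrite -kl; apply/negP => H.
  have : (n %| k' * l)%N.
    by rewrite (divn_eq (k' * l) n.*2) dvdn_addr // dvdn_mull.
  by rewrite Gauss_dvdr // (negbTE nl).
have G : forall s, (@Ssum R n C s (zeta R n ^+ l) == 0)
                 = (@Ssum R n C s (zeta R n ^+ rho') == 0).
  move=> s; rewrite -zk exprM -(@Ssum_root R n C s l (zeta R n)).
  rewrite -(@Ssum_root R n C s l (zeta R n ^+ k')).
  exact: galois_root (@prim_zeta R n n0) ck.
rewrite /zMOD -/rho; case: ifP => _.
  rewrite -/rho' (@PsiChar R n C n0 _ nl) (@PsiChar R n C n0 _ nrho).
  by split => H s; apply/eqP; [rewrite -G | rewrite G]; apply/eqP; apply: H.
rewrite -rr distnEr ?(ltnW rlt) //.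
have nr2 : ~~ (n %| n.*2 - rho')%N by rewrite dvdn_subr // ltnW.
rewrite (@PsiChar R n C n0 _ nl) (@PsiChar R n C n0 _ nr2).
have z0 : zeta R n ^+ rho' != 0.
  apply/eqP => z0; move: (zr_c R n rho'); rewrite z0 mulr0 => /eqP.
  by rewrite eq_sym oner_eq0.
have zc : zeta R n ^+ (n.*2 - rho') = (zeta R n ^+ rho')^*.
  by apply: (mulIf z0); rewrite zr_c -exprD subnK ?zetaN // ltnW.
split => H s; apply/eqP.
  by rewrite zc Ssum_conj conjC_eq0 -G; apply/eqP; apply: H.
by rewrite G -conjC_eq0 -Ssum_conj -zc; apply/eqP; apply: H.
Qed.
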